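(* Let $\beta\in\{1,2\}$ and let $r\geq\beta$ be an integer. Let $x\in[0,1]^N$ satisfy $\|(D^\beta)^Tx\|_0\leq s$, and let $q=Q^{\Sigma\Delta,r}_{\mathcal{A}_\delta}(x)$ be its $r$-th order $\Sigma\Delta$ quantization, whose state vector $u$ satisfies $x-q=D^ru$ and $\|u\|_\infty\leq\delta/2$. Let $\hat x$ be a solution to $$\min_{z\in\mathbb{R}^N}\|(D^\beta)^Tz\|_1\quad\text{subject to}\quad \|D^{-r}(z-q)\|_\infty\leq\delta/2.$$ Then $\|\hat x-x\|_2\leq C\sqrt{s}\,\delta$, where $C$ is a constant independent of $x$.
   Context: $D$ is the $N\times N$ matrix with $1$ on the diagonal, $-1$ on the subdiagonal, $0$ elsewhere; $D^r$ is its $r$-th power. $\|v\|_0$ is the number of nonzero entries. The alphabet is $\mathcal{A}_\delta=\{c+J\delta: J\in\mathbb{Z},\ J_1\leq J\leq J_2\}$ with step size $\delta>0$, and $Q_{\mathcal{A}}(z)$ is an element of $\mathcal{A}$ nearest to $z$. The $r$-th order $\Sigma\Delta$ quantization of $y\in\mathbb{R}^N$: with $u_i=0$ for $i\leq 0$, for $i=1,\dots,N$ set $q_i=Q_{\mathcal{A}}\big(\sum_{j=1}^r(-1)^{j-1}\binom{r}{j}u_{i-j}+y_i\big)$ and define $u_i$ by $(D^ru)_i=y_i-q_i$. The alphabet is assumed to have enough levels that the scheme is stable with $\|u\|_\infty\leq\delta/2$. *)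

(* Defs.v *)
From mathcomp Require Import all_boot all_order all_algebra.
From mathcomp Require Import reals.
Set Implicit Arguments. Unset Strict Implicit. Unset Printing Implicit Defensive.
Import Order.TTheory GRing.Theory Num.Theory.
Local Open Scope ring_scope.

Section Defs.
Variable R : realType.

Definition Dmx (N : nat) : 'M[R]_N :=
  \matrix_(i < N, j < N)
    (if i == j then 1 else if (i : nat) == j.+1 then -1 else 0).

Definition l0 N (v : 'cV[R]_N) : nat := #|[set i | v i 0 != 0]|.
Definition l1 N (v : 'cV[R]_N) : R := \sum_(i < N) `|v i 0|.
Definition l2 N (v : 'cV[R]_N) : R := Num.sqrt (\sum_(i < N) (v i 0) ^+ 2).
Definition linf_le N (v : 'cV[R]_N) (t : R) : Prop := forall i, `|v i 0| <= t.

Definition alphabet (c delta : R) (J1 J2 : int) (a : R) : Prop :=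
  exists J : int, (J1 <= J)%R /\ (J <= J2)%R /\ a = c + J%:~R * delta.

Definition nearest (A : R -> Prop) (z a : R) : Prop :=
  A a /\ forall b, A b -> `|z - a| <= `|z - b|.

(* q is an r-th order Sigma-Delta quantization of y over alphabet A, with
   state vector u (u_i = 0 for i <= 0, indices shifted to 0-based):
   q_i = Q_A( sum_{j=1}^r (-1)^(j-1) C(r,j) u_{i-j} + y_i ), and
   (D^r u)_i = y_i - q_i. *)
Definition sigma_delta (A : R -> Prop) (r N : nat) (y q u : 'cV[R]_N) : Prop :=
  (forall i : 'I_N,
     nearest A
       (\sum_(1 <= j < r.+1 | (j <= i)%N)
          (-1) ^+ (j.-1) * ('C(r, j))%:R * u (insubd i (i - j)%N) 0 + y i 0)
       (q i 0))
  /\ (Dmx N) ^+ r *m u = y - q.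

End Defs.

(* Main.v *)
Require Import Defs.
From mathcomp Require Import all_boot all_order all_algebra.
From mathcomp Require Import reals.
From mathcomp Require Import ring lra.
Import Order.TTheory GRing.Theory Num.Theory.
Set Implicit Arguments. Unset Strict Implicit.
Local Open Scope ring_scope.

Section S.
Variable R : realType.

Definition sh N (v : 'cV[R]_N) (i : 'I_N) : R :=
  \sum_(j < N) ((j : nat) == i.+1)%:R * v j 0.

Lemma sum_pick N (k : 'I_N) (f : 'I_N -> R) :
  \sum_(j < N) (j == k)%:R * f j = f k.
Proof.
rewrite (bigD1 k) //= eqxx mul1r big1 ?addr0 // => j /negbTE ->; by rewrite mul0r.
Qed.

Lemma DT_entry N (v : 'cV[R]_N) i :
  ((Dmx R N)^T *m v) i 0 = v i 0 - sh v i.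
Proof.
rewrite mxE /sh -(sum_pick i (fun j => v j 0)) -sumrB.
apply: eq_bigr => j _; rewrite !mxE.
case: (eqVneq j i) => [->|ne].
  by rewrite ltn_eqF // mul1r mul0r subr0.
rewrite mul0r sub0r.
by case: eqP => _; rewrite ?mulN1r ?mul1r ?mul0r ?oppr0.
Qed.

Lemma sh_sum N (v : 'cV[R]_N) (F : R -> R) :
  (forall x, 0 <= F x) -> F 0 = 0 ->
  \sum_(i < N) F (sh v i) <= \sum_(i < N) F (v i 0).
Proof.
move=> F0 F00; case: N v => [|n] v; first by rewrite !big_ord0.
rewrite big_ord_recr big_ord_recl /=.
have -> : sh v ord_max = 0.
  rewrite /sh big1 // => j _.
  by rewrite /= eqn_leq [(n.+1 <= j)%N]leqNgt ltn_ord andbF mul0r.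
rewrite F00 addr0 -[X in X <= _]add0r lerD ?F0 //.
rewrite le_eqVlt; apply/orP; left; apply/eqP/eq_bigr => i _; congr F.
rewrite /sh (bigD1 (lift ord0 i)) //= eqxx mul1r big1 ?addr0 // => j ne.
case: eqP => [e|_]; last by rewrite mul0r.
by case/eqP: ne; apply: val_inj => /=; rewrite e /bump /= add1n.
Qed.


Definition ssq N (v : 'cV[R]_N) : R := \sum_(i < N) (v i 0) ^+ 2.

Lemma L1D N (v : 'cV[R]_N) : l1 ((Dmx R N)^T *m v) <= 2 * l1 v.
Proof.
rewrite /l1 mulr2n mulrDl mul1r.
apply: le_trans (_ : \sum_(i < N) (`|v i 0| + `|sh v i|) <= _).
  by apply: ler_sum => i _; rewrite DT_entry ler_normB.
rewrite big_split /= lerD2l; apply: sh_sum => //; by rewrite normr0.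
Qed.

Lemma L2D N (v : 'cV[R]_N) : ssq ((Dmx R N)^T *m v) <= 4 * ssq v.
Proof.
rewrite /ssq.
apply: le_trans (_ : \sum_(i < N) (2 * (v i 0)^+2 + 2 * (sh v i)^+2) <= _).
  apply: ler_sum => i _; rewrite DT_entry.
  set a := v i 0; set b := sh v i.
  have h := sqr_ge0 (a + b); rewrite !expr2 in h *; nra.
rewrite big_split /= -!mulr_sumr.
have := sh_sum v (F := fun x => x ^+ 2) (fun x => sqr_ge0 x) (expr0n _ _).
move=> H.
have -> : (4 : R) = 2 + 2 by rewrite -natrD.
lra.
Qed.

Lemma L1Dk N k (v : 'cV[R]_N) : l1 ((Dmx R N ^+ k)^T *m v) <= 2 ^+ k * l1 v.
Proof.
elim: k => [|k IH].
  by rewrite expr0 mul1r; have -> : (1 : 'M[R]_N) = 1%:M by []; rewrite trmx1 mul1mx.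
rewrite exprSr -mulmxE trmx_mul -mulmxA exprS -mulrA.
apply: le_trans (L1D _) _; rewrite ler_pM2l //.
Qed.

Lemma L2Dk N k (v : 'cV[R]_N) : ssq ((Dmx R N ^+ k)^T *m v) <= 4 ^+ k * ssq v.
Proof.
elim: k => [|k IH].
  by rewrite expr0 mul1r; have -> : (1 : 'M[R]_N) = 1%:M by []; rewrite trmx1 mul1mx.
rewrite exprSr -mulmxE trmx_mul -mulmxA exprS -mulrA.
apply: le_trans (L2D _) _; rewrite ler_pM2l //.
Qed.

Lemma Dunit N k : Dmx R N ^+ k \in unitmx.
Proof.
elim: k => [|k IH]; first exact: unitmx1.
rewrite exprSr -mulmxE unitmx_mul IH /= unitmxE.
rewrite det_trig.
  by rewrite big1 ?unitr1 // => i _; rewrite mxE eqxx.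
apply/is_trig_mxP => i j lt; rewrite mxE.
rewrite ifF; last by apply/eqP => e; move: lt; rewrite e ltnn.
rewrite ifF //; apply/eqP => e; by move: lt; rewrite e ltnNge leqnSn.
Qed.


Lemma CS (I : finType) (S : {set I}) (a : I -> R) :
  (\sum_(i in S) a i) ^+ 2 <= #|S|%:R * \sum_(i in S) a i ^+ 2.
Proof.
set A := \sum_(i in S) a i; set Q := \sum_(i in S) a i ^+ 2.
have [S0|Spos] := eqVneq #|S| 0%N.
  have -> : A = 0.
    rewrite /A big1 // => i iS; move: S0; rewrite (cardD1 i) iS //.
  by rewrite S0 expr0n mul0r.
set n : R := #|S|%:R.
have npos : 0 < n by rewrite ltr0n lt0n.
set t := A / n.
have tn : t * n = A by rewrite /t mulfVK // gt_eqF.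
have h0 : 0 <= \sum_(i in S) (a i - t) ^+ 2 by apply: sumr_ge0 => i _; exact: sqr_ge0.
have e : \sum_(i in S) (a i - t) ^+ 2 = Q - 2 * t * A + t ^+ 2 * n.
  transitivity (\sum_(i in S) (a i ^+ 2 - 2 * t * a i + t ^+ 2)).
    by apply: eq_bigr => i _; ring.
  by rewrite big_split sumrB -mulr_sumr sumr_const mulr_natr.
rewrite e -tn in h0 *.
have h1 : 0 <= n * (Q - 2 * t * (t * n) + t ^+ 2 * n) by apply: mulr_ge0 => //; exact: ltW.
have e2 : n * (Q - 2 * t * (t * n) + t ^+ 2 * n) = n * Q - (t * n) ^+ 2 by ring.
rewrite e2 in h1; lra.
Qed.

End S.

Unset Implicit Arguments. Set Strict Implicit.

Theorem theorem1 (R : realType) (beta r : nat) :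
  (beta == 1)%N || (beta == 2)%N -> (beta <= r)%N ->
  exists C : R, 0 < C /\
  forall (N s : nat) (c delta : R) (J1 J2 : int)
         (x q u xhat : 'cV[R]_N),
    0 < delta ->
    (forall i, 0 <= x i 0 <= 1) ->
    (l0 ((Dmx R N ^+ beta)^T *m x) <= s)%N ->
    sigma_delta (alphabet c delta J1 J2) r x q u ->
    linf_le u (delta / 2) ->
    linf_le (invmx (Dmx R N ^+ r) *m (xhat - q)) (delta / 2) ->
    (forall z : 'cV[R]_N,
       linf_le (invmx (Dmx R N ^+ r) *m (z - q)) (delta / 2) ->
       l1 ((Dmx R N ^+ beta)^T *m xhat) <= l1 ((Dmx R N ^+ beta)^T *m z)) ->
    l2 (xhat - x) <= C * Num.sqrt (s%:R) * delta.
Proof.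
move=> _ hbr; exists (2 ^+ r.+1); split; first exact: exprn_gt0.
move=> N s c delta J1 J2 x q u xhat dpos _ hl0 [_ hsd] hu hxh hmin.
set M := Dmx R N ^+ r in hxh hmin hsd *.
have Mu : M \in unitmx := Dunit R N r.
set h := xhat - x.
set w := invmx M *m h.
have ux : invmx M *m (x - q) = u by rewrite -hsd mulKmx.
have hw : forall i, `|w i 0| <= delta.
  move=> i.
  have -> : w = invmx M *m (xhat - q) - u.
    rewrite -ux -mulmxBr /w /h; congr (_ *m _).
    by rewrite opprB addrA subrK.
  rewrite !mxE.
  apply: le_trans (ler_normB _ _) _.
  have := hxh i; have := hu i; rewrite !mxE; lra.
have e1 : ssq h = \sum_(j < N) (M^T *m h) j 0 * w j 0.
  transitivity ((h^T *m h) 0 0).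
    by rewrite /ssq mxE; apply: eq_bigr => j _; rewrite [h^T _ _]mxE expr2.
  have hMw : h = M *m w by rewrite /w mulKVmx.
  rewrite [X in _ *m X]hMw mulmxA.
  rewrite -[M in h^T *m M]trmxK -trmx_mul mxE; apply: eq_bigr => j _; by rewrite mxE.
have H1 : ssq h <= delta * l1 (M^T *m h).
  rewrite e1 /l1 mulr_sumr; apply: ler_sum => j _.
  apply: le_trans (ler_norm _) _; rewrite normrM mulrC ler_wpM2r //.
set g := (Dmx R N ^+ beta)^T *m h.
have eM : M^T *m h = (Dmx R N ^+ (r - beta))^T *m g.
  rewrite /g mulmxA -trmx_mul mulmxE -exprD /M addnC subnK //.
have H2 : l1 (M^T *m h) <= 2 ^+ (r - beta) * l1 g.
  rewrite eM; apply: L1Dk.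
set a := (Dmx R N ^+ beta)^T *m x.
set a' := (Dmx R N ^+ beta)^T *m xhat.
have ge : forall i, g i 0 = a' i 0 - a i 0 by move=> i; rewrite /g /h mulmxBr mxE [(- (_ : 'cV[R]_N)) i 0]mxE.
have opt : l1 a' <= l1 a.
  apply: hmin => i; rewrite ux; exact: hu.
set S := [set i | a i 0 != 0].
have hS : (#|S| <= s)%N by [].
set GS := \sum_(i in S) `|g i 0|.
set GN := \sum_(i < N | i \notin S) `|g i 0|.
have l1g : l1 g = GS + GN by rewrite /l1 (bigID (fun i => i \in S)).
have l1a : l1 a = \sum_(i in S) `|a i 0|.
  rewrite /l1 (bigID (fun i => i \in S)) /= [X in _ + X]big1 ?addr0 // => i.
  by rewrite inE negbK => /eqP ->; rewrite normr0.
have l1a' : l1 a' >= \sum_(i in S) `|a i 0| - GS + GN.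
  rewrite /l1 [X in _ <= X](bigID (fun i => i \in S)) /= /GS /GN -sumrB.
  apply: lerD; apply: ler_sum => i.
    move=> _; rewrite ge; have := ler_normB (a' i 0) (a' i 0 - a i 0).
    by rewrite opprB addrC subrK; lra.
  rewrite inE negbK => /eqP a0; by rewrite ge a0 subr0.
have GNS : GN <= GS by lra.
have GS0 : 0 <= GS by apply: sumr_ge0 => i _.
have H3 : GS ^+ 2 <= s%:R * ssq g.
  apply: le_trans (CS S (fun i => `|g i 0|)) _.
  apply: ler_pM; [by []| by apply: sumr_ge0 => i _; exact: sqr_ge0| by rewrite ler_nat|].
  rewrite /ssq [X in _ <= X](bigID (fun i => i \in S)) /=.
  rewrite -[X in X <= _]addr0; apply: lerD.
    by under eq_bigr do rewrite real_normK ?num_real //.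
  by apply: sumr_ge0 => i _; exact: sqr_ge0.
have H4 : ssq g <= (2 ^+ beta) ^+ 2 * ssq h.
  have -> : (2 ^+ beta) ^+ 2 = (4 : R) ^+ beta.
    by rewrite -exprM mulnC exprM expr2 -natrM.
  exact: L2Dk.
set Hs := ssq h.
have H0 : 0 <= Hs by apply: sumr_ge0 => i _; exact: sqr_ge0.
set P : R := 2 ^+ (r - beta).
set B : R := 2 ^+ beta.
have P0 : 0 <= P by exact: exprn_ge0.
have B0 : 0 <= B by exact: exprn_ge0.
have H5 : Hs <= delta * P * 2 * GS.
  apply: (le_trans H1); rewrite -!mulrA; apply: ler_wpM2l; first exact: ltW.
  apply: (le_trans H2); rewrite ler_wpM2l // l1g; lra.
have K0 : 0 <= delta * P * 2 by apply: mulr_ge0; [apply: mulr_ge0; [exact: ltW|]|].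
have H6 : Hs * Hs <= ((delta * P * 2) ^+ 2 * s%:R * B ^+ 2) * Hs.
  apply: le_trans (_ : (delta * P * 2 * GS) ^+ 2 <= _).
    by rewrite expr2; apply: ler_pM.
  have -> : ((delta * P * 2) ^+ 2 * s%:R * B ^+ 2) * Hs
     = (delta * P * 2) ^+ 2 * (s%:R * (B ^+ 2 * Hs)) by ring.
  rewrite exprMn; apply: ler_wpM2l; first exact: exprn_ge0.
  apply: (le_trans H3); apply: ler_wpM2l => //.
have H7 : Hs <= (delta * P * 2) ^+ 2 * s%:R * B ^+ 2.
  have [->|Hp] := eqVneq Hs 0.
    by apply: mulr_ge0; [apply: mulr_ge0; [exact: exprn_ge0|]|exact: exprn_ge0].
  have Hp' : 0 < Hs by rewrite lt0r Hp H0.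
  by rewrite -(ler_pM2r Hp').
have eC : (2 : R) ^+ r.+1 = P * B * 2.
  by rewrite /P /B -exprD subnK // exprSr.
rewrite eC /l2 -/(ssq h) -/Hs.
have C0 : 0 <= P * B * 2 * Num.sqrt s%:R * delta.
  apply: mulr_ge0; last exact: ltW.
  apply: mulr_ge0; last exact: sqrtr_ge0.
  by apply: mulr_ge0 => //; apply: mulr_ge0.
rewrite -(ger0_norm C0) -sqrtr_sqr ler_sqrt; last exact: sqr_ge0.
apply: (le_trans H7).
rewrite !exprMn sqr_sqrtr ?ler0n //.
by rewrite le_eqVlt; apply/orP; left; apply/eqP; ring.
Qed.
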